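(* For every positive integer $n$, the variety of complex $n$-dimensional nilpotent binary Leibniz algebras contains at least one rigid algebra.
   Context: An algebra is a Leibniz algebra if it satisfies $(xy)z=(xz)y+x(yz)$; it is a binary Leibniz algebra if every subalgebra generated by two elements is a Leibniz algebra; it is nilpotent if for some $m$ every product of $m$ elements (any bracketing) vanishes. The variety is the Zariski-closed set of bilinear products on a fixed $n$-dimensional complex vector space $V$ (identified with structure constants in $\mathbb{C}^{n^3}$) satisfying these conditions, with $GL(V)$ acting by $(g*\mu)(x,y)=g\mu(g^{-1}x,g^{-1}y)$. An algebra is rigid if its $GL(V)$-orbit is Zariski-open in the variety. *)

(* Defs.v *)
From mathcomp Require Import all_boot all_algebra.
From mathcomp Require Import complex.
From mathcomp Require Import Rstruct.
From mathcomp Require Import mpoly.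

Set Implicit Arguments.
Unset Strict Implicit.
Unset Printing Implicit Defensive.

Import GRing.Theory.
Local Open Scope ring_scope.

Definition CC := complex Rdefinitions.R.

(* A bilinear product on V = C^n, given by its structure constants:
   e_i e_j = \sum_k c i j k e_k.  Vectors of V are row vectors 'rV[CC]_n. *)
Definition sconst (n : nat) := 'I_n -> 'I_n -> 'I_n -> CC.

Definition vmul (n : nat) (c : sconst n) (x y : 'rV[CC]_n) : 'rV[CC]_n :=
  \row_k \sum_(i < n) \sum_(j < n) x 0 i * y 0 j * c i j k.

Definition leibniz_id (n : nat) (c : sconst n) (a b d : 'rV[CC]_n) : Prop :=
  vmul c (vmul c a b) d = vmul c (vmul c a d) b + vmul c a (vmul c b d).

Definition is_leibniz (n : nat) (c : sconst n) : Prop :=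
  forall a b d, leibniz_id c a b d.

Definition is_subalg (n : nat) (c : sconst n) (S : 'rV[CC]_n -> Prop) : Prop :=
  [/\ S 0,
      (forall u v, S u -> S v -> S (u + v)),
      (forall (a : CC) u, S u -> S (a *: u)) &
      (forall u v, S u -> S v -> S (vmul c u v))].

Definition in_gen (n : nat) (c : sconst n) (x y v : 'rV[CC]_n) : Prop :=
  forall S, is_subalg c S -> S x -> S y -> S v.

Definition binary_leibniz (n : nat) (c : sconst n) : Prop :=
  forall x y a b d, in_gen c x y a -> in_gen c x y b -> in_gen c x y d ->
    leibniz_id c a b d.

Inductive is_prod (n : nat) (c : sconst n) : nat -> 'rV[CC]_n -> Prop :=
| prod_leaf x : is_prod c 1 x
| prod_node i j x y : is_prod c i x -> is_prod c j y ->
    is_prod c (i + j) (vmul c x y).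

Definition nilpotent_alg (n : nat) (c : sconst n) : Prop :=
  exists m : nat, (0 < m)%N /\ forall v, is_prod c m v -> v = 0.

Definition nbl_variety (n : nat) (c : sconst n) : Prop :=
  binary_leibniz c /\ nilpotent_alg c.

(* GL(V)-orbit: c' = g * c, (g*mu)(x,y) = g mu(g^-1 x, g^-1 y); with row
   vectors, the linear map g acts as x |-> x *m g. *)
Definition in_orbit (n : nat) (c c' : sconst n) : Prop :=
  exists g : 'M[CC]_n, g \in unitmx /\
    forall x y, vmul c' x y = vmul c (x *m invmx g) (y *m invmx g) *m g.

Definition trip (n : nat) := ('I_n * 'I_n * 'I_n)%type.
Definition nvars (n : nat) := #|{: trip n}|.

Definition coords (n : nat) (c : sconst n) : 'I_(nvars n) -> CC :=
  fun t => let: (i, j, k) := enum_val t in c i j k.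

(* U is Zariski-open in P (subspace topology from C^{n^3}): U = P \ Z(F)
   for some family F of polynomials in the structure constants. *)
Definition rel_zariski_open (n : nat) (P U : sconst n -> Prop) : Prop :=
  exists F : {mpoly CC[nvars n]} -> Prop,
    forall c, U c <-> (P c /\ exists p, F p /\ p.@[coords c] != 0).

Definition rigid_in (n : nat) (P : sconst n -> Prop) (c : sconst n) : Prop :=
  rel_zariski_open P (in_orbit c).

(* Main.v *)
Require Import Defs.
From mathcomp Require Import all_boot all_algebra.
From mathcomp Require Import complex.
From mathcomp Require Import Rstruct.
From mathcomp Require Import mpoly.
From mathcomp Require Import zify.
Set Implicit Arguments. Unset Strict Implicit. Unset Printing Implicit Defensive.
Import GRing.Theory.
Local Open Scope ring_scope.

Lemma nilp_mx (F : fieldType) n' (A : 'M[F]_n'.+1) M : A ^+ M = 0 -> A ^+ n'.+1 = 0.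
Proof.
move=> HM.
have hd : mxminpoly A %| ('X - 0%:P) ^+ M.
  apply/mxminpoly_minP; by rewrite subr0 rmorphXn /= horner_mx_X.
case/dvdp_exp_XsubCP: hd => k _ hk.
have hk2 : ('X - 0%:P) ^+ k %| mxminpoly A by rewrite (eqp_dvdr _ hk) dvdpp.
have Ak : A ^+ k = 0.
  have H : mxminpoly A %| ('X - 0%:P) ^+ k by rewrite (eqp_dvdl _ hk) dvdpp.
  move/mxminpoly_minP: H; by rewrite subr0 rmorphXn /= horner_mx_X.
have kle : (k <= n'.+1)%N.
  have := dvdp_leq (monic_neq0 (char_poly_monic A)) (dvdp_trans hk2 (mxminpoly_dvd_char A)).
  by rewrite size_char_poly size_exp_XsubC.
rewrite (_ : A ^+ n'.+1 = A ^+ k * A ^+ (n'.+1 - k)); first by rewrite Ak mul0r.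
by rewrite -exprD subnKC.
Qed.

Lemma mxXD n' (A : 'M[CC]_n'.+1) a b : A ^+ a *m A ^+ b = A ^+ (a + b).
Proof. by rewrite exprD. Qed.

Lemma mxXS n' (A : 'M[CC]_n'.+1) a : A ^+ a *m A = A ^+ a.+1.
Proof. by rewrite exprSr. Qed.

Definition MR n (c : sconst n) (y : 'rV[CC]_n) : 'M[CC]_n :=
  \matrix_(i, k) \sum_j y 0 j * c i j k.
Definition ML n (c : sconst n) (x : 'rV[CC]_n) : 'M[CC]_n :=
  \matrix_(j, k) \sum_i x 0 i * c i j k.

Lemma vmulR n (c : sconst n) x y : vmul c x y = x *m MR c y.
Proof.
apply/rowP => k; rewrite !mxE; apply: eq_bigr => i _; rewrite !mxE mulr_sumr.
by apply: eq_bigr => j _; rewrite !mulrA.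
Qed.

Lemma vmulL n (c : sconst n) x y : vmul c x y = y *m ML c x.
Proof.
apply/rowP => k; rewrite !mxE exchange_big; apply: eq_bigr => j _; rewrite !mxE mulr_sumr.
by apply: eq_bigr => i _; rewrite mulrCA !mulrA.
Qed.

Lemma vmul0l n (c : sconst n) y : vmul c 0 y = 0.
Proof. by rewrite vmulR mul0mx. Qed.
Lemma vmul0r n (c : sconst n) x : vmul c x 0 = 0.
Proof. by rewrite vmulL mul0mx. Qed.

Fixpoint Pw n (c : sconst n) (m : nat) (x : 'rV[CC]_n) : 'rV[CC]_n :=
  if m is m'.+1 then vmul c (Pw c m' x) x else x.

Definition NF n : sconst n := fun i j k => ((j == 0 :> nat) && (i.+1 == k :> nat))%:R.
Definition Sh n : 'M[CC]_n := \matrix_(i, k) ((i.+1 == k :> nat)%:R).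

Lemma vmulNF n' (a b : 'rV[CC]_n'.+1) : vmul (@NF n'.+1) a b = b 0 0 *: (a *m Sh n'.+1).
Proof.
apply/rowP => k; rewrite !mxE mulr_sumr; apply: eq_bigr => i _.
rewrite (bigD1 ord0) //= big1 ?addr0.
  rewrite /NF /Sh !mxE /=.
  by rewrite mulrAC mulrC mulrA.
by move=> j /negPf hj; rewrite /NF /= -[(j == 0 :> nat)]/(j == ord0) hj /= mulr0.
Qed.

Lemma Sh00 n' (a : 'rV[CC]_n'.+1) : (a *m Sh n'.+1) 0 0 = 0.
Proof. by rewrite !mxE big1 // => i _; rewrite mxE /= mulr0. Qed.

Lemma NF_leibniz n' : is_leibniz (@NF n'.+1).
Proof.
move=> a b d; rewrite /leibniz_id !vmulNF mxE Sh00 mulr0 scale0r addr0.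
by rewrite -!scalemxAl !scalerA mulrC.
Qed.

Lemma is_prod_pos n (c : sconst n) m v : is_prod c m v -> (0 < m)%N.
Proof. by elim=> // i j x y _ IH _ _; rewrite addn_gt0 IH. Qed.

Lemma NF_prod n' m v : is_prod (@NF n'.+1) m v ->
  forall k : 'I_n'.+1, (k.+1 < m)%N -> v 0 k = 0.
Proof.
elim=> [x k //|i j x y Hx IHx Hy IHy k].
have j0 := is_prod_pos Hy.
rewrite vmulNF mxE.
case: j Hy IHy j0 => [//|[|j]] Hy IHy _ hk; last first.
  by rewrite (IHy ord0) // mul0r.
rewrite addn1 ltnS in hk.
rewrite !mxE big1 ?mulr0 // => l _; rewrite mxE.
case: eqP => [hl|]; last by rewrite mulr0.
by rewrite IHx ?mul0r // hl.
Qed.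

Lemma NF_nil n' : nilpotent_alg (@NF n'.+1).
Proof.
exists n'.+2; split => // v hv; apply/rowP => k; rewrite mxE.
by rewrite (NF_prod hv) // ltnS.
Qed.

Lemma NF_pow n' (y : 'rV[CC]_n'.+1) m (hm : (m < n'.+1)%N) :
  (Pw (@NF n'.+1) m y) 0 (Ordinal hm) = y 0 0 ^+ m.+1.
Proof.
elim: m hm => [|m IH] hm /=; first by rewrite expr1; congr (y 0 _); apply/val_inj.
rewrite vmulNF !mxE exprS; congr (_ * _).
rewrite (bigD1 (Ordinal (ltnW hm))) //= big1 ?addr0.
  by rewrite IH mxE eqxx mulr1.
move=> l hl; rewrite mxE /=.
case: eqP => [[hl2]|]; last by rewrite mulr0.
by exfalso; move: hl; rewrite -val_eqE /= hl2 eqxx.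
Qed.


Lemma orbit_hom n (c0 c : sconst n) g (ug : g \in unitmx)
  (hg : forall X Y, vmul c X Y = vmul c0 (X *m invmx g) (Y *m invmx g) *m g) X Y :
  vmul c X Y *m invmx g = vmul c0 (X *m invmx g) (Y *m invmx g).
Proof. by rewrite hg mulmxK. Qed.

Lemma orbit_facts n' (c : sconst n'.+1) : Defs.in_orbit (@NF n'.+1) c ->
  nbl_variety c /\ exists t k, (Pw c n' (delta_mx 0 t)) 0 k != 0.
Proof.
case=> g [ug hg].
have H := orbit_hom ug hg.
have L : is_leibniz c.
  move=> a b d; rewrite /leibniz_id; apply: (can_inj (mulmxKV ug)).
  rewrite /= mulmxDl !H; exact: NF_leibniz.
have Pr : forall m v, is_prod c m v -> is_prod (@NF n'.+1) m (v *m invmx g).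
  move=> m v; elim=> [x|i j x y _ IHx _ IHy]; first exact: prod_leaf.
  by rewrite H; apply: prod_node.
have Pp : forall m x, Pw c m x *m invmx g = Pw (@NF n'.+1) m (x *m invmx g).
  by move=> m x; elim: m => //= m IH; rewrite H IH.
split.
  split; first by move=> x y a b d _ _ _; exact: L.
  exists n'.+2; split => // v hv.
  have hv' := NF_prod (Pr _ _ hv).
  have -> : v = v *m invmx g *m g by rewrite mulmxKV.
  have -> : v *m invmx g = 0.
    by apply/rowP => k; rewrite [RHS]mxE; apply: hv'; rewrite ltnS.
  by rewrite mul0mx.
have [t ht] : exists t, invmx g t 0 != 0.
  case: (pickP (fun t => invmx g t 0 != 0)) => [t ht|h]; first by exists t.
  have := mulmxV ug; move/matrixP => /(_ 0 0); rewrite !mxE big1 ?eqxx.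
    by move/eqP; rewrite eq_sym oner_eq0.
  by move=> i _; move: (h i) => /negbFE/eqP ->; rewrite mulr0.
exists t.
set x := delta_mx 0 t.
have hy : (x *m invmx g) 0 0 = invmx g t 0 by rewrite -rowE mxE.
have hn : (Pw c n' x *m invmx g) 0 (Ordinal (ltnSn n')) != 0.
  by rewrite Pp NF_pow hy expf_neq0.
case: (pickP (fun k => Pw c n' x 0 k != 0)) => [k hk|h]; first by exists k.
exfalso; move: hn; rewrite (_ : Pw c n' x = 0) ?mul0mx ?mxE ?eqxx //.
by apply/rowP => k; move: (h k) => /negbFE/eqP ->; rewrite mxE.
Qed.

Lemma classify n' (c : sconst n'.+1) t k : nbl_variety c ->
  (Pw c n' (delta_mx 0 t)) 0 k != 0 -> Defs.in_orbit (@NF n'.+1) c.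
Proof.
case=> BL [m [m0 Hm]] hk.
move: hk; set x := delta_mx 0 t => hk.
set A := MR c x.
have PwA : forall j y, Pw c j y = y *m MR c y ^+ j.
  move=> j y; elim: j => [|j IH] /=; first by rewrite expr0 mulmx1.
  by rewrite IH vmulR exprSr -mulmxA mulmxE.
have PA : forall j, Pw c j x = x *m A ^+ j by move=> j; exact: PwA.
have prodA : forall j y, is_prod c j.+1 (y *m A ^+ j).
  move=> j y; elim: j => [|j IH]; first by rewrite expr0 mulmx1; apply: prod_leaf.
  rewrite exprSr (_ : y *m (A ^+ j * A) = vmul c (y *m A ^+ j) x); last by rewrite vmulR mulmxA.
  have -> : j.+2 = (j.+1 + 1)%N by rewrite addn1.
  exact: prod_node IH (prod_leaf _ _).
have Anil : A ^+ n'.+1 = 0.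
  apply: (@nilp_mx _ _ _ m.-1); apply/row_matrixP => i; rewrite row0 rowE.
  by apply: Hm; rewrite -{1}(prednK m0); apply: prodA.
have Ahigh : forall e, (n' < e)%N -> A ^+ e = 0.
  move=> e he; rewrite (_ : A ^+ e = A ^+ n'.+1 * A ^+ (e - n'.+1)); first by rewrite Anil mul0r.
  by rewrite -exprD subnKC.
have Gx : in_gen c x x x by move=> S _ Sx _.
have Gm : forall a b, in_gen c x x a -> in_gen c x x b -> in_gen c x x (vmul c a b).
  move=> a b ha hb S hS Sx Sy; have [_ _ _ hm] := hS; apply: hm; [exact: ha | exact: hb].
have GP : forall j, in_gen c x x (x *m A ^+ j).
  by move=> j; rewrite -PA; elim: j => //= j IH; apply: Gm.
have Z : forall j a, in_gen c x x a -> vmul c a (x *m A ^+ j.+1) = 0.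
  elim=> [|j IH] a ha.
    have := BL x x a x x ha Gx Gx; rewrite /leibniz_id => H.
    rewrite expr1 -vmulR.
    by rewrite -[vmul c a _](addKr (vmul c (vmul c a x) x)) -H addNr.
  have := BL x x a (x *m A ^+ j.+1) x ha (GP _) Gx; rewrite /leibniz_id => H.
  rewrite IH // vmul0l IH ?add0r in H; last exact: Gm.
  by rewrite exprSr mulmxA -vmulR -H.
pose g : 'M[CC]_n'.+1 := \matrix_(i < n'.+1) (x *m A ^+ i).
have rg : forall i, row i g = x *m A ^+ i by move=> i; rewrite rowK.
have xn : x *m A ^+ n' != 0.
  by apply: contra hk; rewrite PA => /eqP ->; rewrite mxE.
have inj : forall a : 'rV_n'.+1, a *m g = 0 -> a = 0.
  move=> a ha.
  suff: forall j, forall i : 'I_n'.+1, (i < j)%N -> a 0 i = 0.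
    by move=> H; apply/rowP => i; rewrite mxE; apply: (H n'.+1).
  elim=> [//|j IH] i hi.
  case: (ltnP i j) => hij; first exact: IH.
  have eij : nat_of_ord i = j by apply/eqP; rewrite eqn_leq hij -ltnS hi.
  have : a *m g *m A ^+ (n' - i) = 0 by rewrite ha mul0mx.
  rewrite [a *m g]mulmx_sum_row mulmx_suml (bigD1 i) //= big1 ?addr0.
    rewrite rg -scalemxAl -mulmxA mxXD subnKC; last by rewrite -ltnS.
    by move/eqP; rewrite scaler_eq0 (negPf xn) orbF => /eqP.
  move=> l hl; rewrite rg -scalemxAl -mulmxA mxXD.
  case: (ltnP l i) => hli; first by rewrite IH ?scale0r // -eij.
  rewrite Ahigh ?mulmx0 ?scaler0 //.
  have : (i < l)%N by rewrite ltn_neqAle hli andbT; apply: contra hl => /eqP hh; apply/eqP/val_inj.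
  move: (ltn_ord i) => h1 h2; lia.
have ug : g \in unitmx.
  rewrite -row_free_unit -kermx_eq0; apply/eqP/row_matrixP => i; rewrite row0.
  by apply: inj; rewrite -row_mul mulmx_ker row0.
have gA : g *m A = Sh n'.+1 *m g.
  apply/row_matrixP => i; rewrite !row_mul rg -mulmxA mxXS.
  rewrite [RHS]mulmx_sum_row.
  case: (ltnP i.+1 n'.+1) => hi.
    rewrite (bigD1 (Ordinal hi)) //= big1 ?addr0.
      by rewrite !mxE eqxx scale1r rg.
    move=> l hl; rewrite !mxE; case: eqP => [hh|]; last by rewrite scale0r.
    by exfalso; move/eqP: hl; apply; apply: val_inj; rewrite /= -hh.
  rewrite Ahigh // mulmx0.
  rewrite big1 // => l _; rewrite !mxE; case: eqP => [hh|]; last by rewrite scale0r.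
  by exfalso; move: (ltn_ord l); rewrite -hh ltnNge hi.
have gZ : forall j : 'I_n'.+1, j != 0 -> g *m MR c (row j g) = 0.
  move=> j hj; apply/row_matrixP => l; rewrite row_mul row0 -vmulR rg rg.
  case: j hj => [[|j] hj] //= _.
  by apply: Z.
exists g; split => // X Y.
rewrite -[X in LHS](mulmxKV ug) -[Y in LHS](mulmxKV ug).
move: (X *m invmx g) (Y *m invmx g) => a b.
rewrite vmulNF -scalemxAl -mulmxA -gA.
rewrite vmulL [b *m g]mulmx_sum_row mulmx_suml (bigD1 0) //= big1 ?addr0.
  by rewrite -scalemxAl -vmulL vmulR rg expr0 mulmx1 mulmxA.
move=> j hj; rewrite -scalemxAl -vmulL vmulR -mulmxA gZ // mulmx0 scaler0 //.
Qed.

Definition Xc n (i j k : 'I_n) : {mpoly CC[nvars n]} := 'X_(enum_rank (i, j, k)).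

Fixpoint Pv n (t : 'I_n) (m : nat) (k : 'I_n) : {mpoly CC[nvars n]} :=
  if m is m'.+1 then \sum_(i < n) \sum_(j < n) Pv t m' i * (((j == t)%:R : CC)%:MP) * Xc i j k
  else (((k == t)%:R : CC)%:MP).

Lemma Pv_eval n (t : 'I_n) m k (c : sconst n) :
  (Pv t m k).@[coords c] = (Pw c m (delta_mx 0 t)) 0 k.
Proof.
elim: m k => [|m IH] k /=; first by rewrite mevalC mxE eqxx.
rewrite !mxE raddf_sum; apply: eq_bigr => i _.
rewrite raddf_sum; apply: eq_bigr => j _.
rewrite /= !mevalM IH mevalC mevalXU /coords enum_rankK mxE eqxx.
by [].
Qed.

Theorem mainTheorem7 (n : nat) (hn : (0 < n)%N) :
  exists c : sconst n, nbl_variety c /\ rigid_in (@nbl_variety n) c.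
Proof.
case: n hn => [//|n'] _.
exists (@NF n'.+1); split.
  split; [by move=> x y a b d _ _ _; exact: NF_leibniz | exact: NF_nil].
exists (fun p => exists t k, forall c, p.@[coords c] = (Pw c n' (delta_mx 0 t)) 0 k).
move=> c; split.
  move=> /orbit_facts [hv [t [k hk]]]; split => //.
  exists (Pv t n' k); split; first by exists t, k => c'; exact: Pv_eval.
  by rewrite Pv_eval.
case=> hv [p [[t [k hp]] hpc]].
by apply: (@classify n' c t k hv); rewrite -hp.
Qed.
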